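(* Let $A=(A_j)_{j=0}^{d-1}$ be an injective MPS tensor of bond dimension $D$ in left canonical form, let $u$ be a $d\times d$ unitary matrix, and let $\mathbb{E}_u=\sum_{j,k=0}^{d-1} u_{jk}\, A_k\otimes \overline{A_j}$. Then $\mathbb{E}_u$ has an eigenvalue of modulus $1$ if and only if there exist a unitary $D\times D$ matrix $v$ and an angle $\theta$ such that for all $j\in\{0,\dots,d-1\}$, $$\sum_{k=0}^{d-1}u_{jk}A_k = e^{i\theta}\, v A_j v^\dagger .$$
   Context: An MPS tensor of physical dimension $d$ and bond dimension $D$ is a collection of complex $D\times D$ matrices $A_0,\dots,A_{d-1}$. It is in left canonical form if $\sum_{j=0}^{d-1}A_j^\dagger A_j=\mathbb{1}_{D}$. Its transfer matrix is $\mathbb{E}=\sum_{j}A_j\otimes\overline{A_j}$. The tensor (in left canonical form) is called injective if $1$ is a non-degenerate eigenvalue of the transfer matrix whose left eigenvector is the identity $\mathbb{1}_D$ (unique up to scaling, i.e. the only solution of $\sum_jA_j^\dagger XA_j=X$ is $X\propto\mathbb{1}$), all other eigenvalues of $\mathbb{E}$ have modulus strictly less than $1$, and there is a unique, full-rank density matrix $\rho$ with $\sum_j A_j\rho A_j^\dagger=\rho$. (All eigenvalues of $\mathbb{E}_u$ have modulus at most $1$.) *)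

(* Defs.v *)
From HB Require Import structures.
From mathcomp Require Import all_boot all_order all_algebra.
From mathcomp Require Import complex mxtens.
From mathcomp Require Import reals trigo.

Set Implicit Arguments.
Unset Strict Implicit.
Unset Printing Implicit Defensive.

Import Order.TTheory GRing.Theory Num.Theory.
Local Open Scope ring_scope.
Local Open Scope complex_scope.

Section MPS.
Variable R : realType.
Local Notation C := R[i].

Definition dagger m n (M : 'M[C]_(m, n)) : 'M[C]_(n, m) := (map_mx Num.conj M)^T.

Definition conjmxC m n (M : 'M[C]_(m, n)) : 'M[C]_(m, n) := map_mx Num.conj M.

Definition expi (theta : R) : C := (cos theta) +i* (sin theta).

Definition unitary n (U : 'M[C]_n) : Prop := U *m dagger U = 1%:M.

Definition left_canonical d D (A : 'I_d -> 'M[C]_D) : Prop :=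
  \sum_(j < d) dagger (A j) *m A j = 1%:M.

Definition transfer d D (A : 'I_d -> 'M[C]_D) : 'M[C]_(D * D) :=
  \sum_(j < d) tensmx (A j) (conjmxC (A j)).

Definition transfer_u d D (A : 'I_d -> 'M[C]_D) (u : 'M[C]_d) : 'M[C]_(D * D) :=
  \sum_(j < d) \sum_(k < d) u j k *: tensmx (A k) (conjmxC (A j)).

Definition psd n (M : 'M[C]_n) : Prop :=
  dagger M = M /\ forall x : 'rV[C]_n, 0 <= (x *m M *m dagger x) 0 0.

Definition density n (M : 'M[C]_n) : Prop := psd M /\ \tr M = 1.

Definition injective_mps d D (A : 'I_d -> 'M[C]_D) : Prop :=
  [/\ eigenvalue (transfer A) 1,
      (* 1 non-degenerate, left fixed points are multiples of the identity *)
      (forall X : 'M[C]_D, \sum_(j < d) dagger (A j) *m X *m A j = X ->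
         exists c : C, X = c%:M),
      (forall l : C, eigenvalue (transfer A) l -> l != 1 -> `|l| < 1) &
      exists rho : 'M[C]_D,
        [/\ density rho, rho \in unitmx,
            \sum_(j < d) A j *m rho *m dagger (A j) = rho &
            forall rho' : 'M[C]_D, density rho' ->
              \sum_(j < d) A j *m rho' *m dagger (A j) = rho' -> rho' = rho]].

End MPS.

(* Main.v *)
Require Import Defs.
From HB Require Import structures.
From mathcomp Require Import all_boot all_order all_algebra.
From mathcomp Require Import complex mxtens.
From mathcomp Require Import reals trigo.
From mathcomp Require Import ring lra.

Set Implicit Arguments.
Unset Strict Implicit.
Unset Printing Implicit Defensive.
Import Order.TTheory GRing.Theory Num.Theory.
Local Open Scope ring_scope.
Local Open Scope complex_scope.
Section Aux.
Variable R : realType.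
Local Notation C := R[i].

Lemma sum_tens m n (F : 'I_(m * n) -> C) :
  \sum_(k < m * n) F k = \sum_(i < m) \sum_(j < n) F (mxtens_index (i, j)).
Proof.
rewrite pair_big /=.
apply: (reindex (fun p : 'I_m * 'I_n => mxtens_index (p.1, p.2))) => /=.
exists (@mxtens_unindex m n) => [[i j] _|k _]; first by rewrite /= mxtens_indexK.
by rewrite -surjective_pairing mxtens_unindexK.
Qed.

Variable D : nat.

Definition vecr (M : 'M[C]_D) : 'rV[C]_(D * D) :=
  \row_k M (@mxtens_unindex D D k).1 (@mxtens_unindex D D k).2.
Definition matr (x : 'rV[C]_(D * D)) : 'M[C]_D :=
  \matrix_(i, j) x 0 (mxtens_index (i, j)).

Lemma vecrK : cancel vecr matr.
Proof. by move=> M; apply/matrixP => i j; rewrite !mxE mxtens_indexK. Qed.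

Lemma matrK : cancel matr vecr.
Proof.
move=> x; apply/rowP => k; rewrite !mxE -surjective_pairing mxtens_unindexK.
by [].
Qed.

Lemma vecrD M N : vecr (M + N) = vecr M + vecr N.
Proof. by apply/rowP => k; rewrite !mxE. Qed.
Lemma vecrZ c M : vecr (c *: M) = c *: vecr M.
Proof. by apply/rowP => k; rewrite !mxE. Qed.
Lemma vecr0 : vecr 0 = 0.
Proof. by apply/rowP => k; rewrite !mxE. Qed.
Lemma vecr_sum I (r : seq I) P (F : I -> 'M[C]_D) :
  vecr (\sum_(i <- r | P i) F i) = \sum_(i <- r | P i) vecr (F i).
Proof. exact: (big_morph _ vecrD vecr0). Qed.
Lemma vecr_inj : injective vecr.
Proof. exact: can_inj vecrK. Qed.

Lemma K1 (P Q M : 'M[C]_D) : vecr M *m (P *t Q) = vecr (P^T *m M *m Q).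
Proof.
apply/rowP => k; case: (mxtens_indexP k) => j l.
rewrite !mxE sum_tens mxtens_indexK /=.
under eq_bigr do under eq_bigr do rewrite !mxE !mxtens_indexK /=.
rewrite exchange_big /=; apply: eq_bigr => k' _.
rewrite !mxE mulr_suml; apply: eq_bigr => i _.
by rewrite !mxE mulrA [M i k' * _]mulrC.
Qed.

End Aux.
Section Dag.
Variable R : realType.
Local Notation C := R[i].
Local Notation cj := (@Num.conj C).

Lemma daggerM m n p (A : 'M[C]_(m, n)) (B : 'M[C]_(n, p)) :
  dagger (A *m B) = dagger B *m dagger A.
Proof. by rewrite /dagger map_mxM trmx_mul. Qed.
Lemma daggerD m n (A B : 'M[C]_(m, n)) : dagger (A + B) = dagger A + dagger B.
Proof. by apply/matrixP => i j; rewrite !mxE rmorphD. Qed.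
Lemma daggerN m n (A : 'M[C]_(m, n)) : dagger (- A) = - dagger A.
Proof. by apply/matrixP => i j; rewrite !mxE rmorphN. Qed.
Lemma daggerB m n (A B : 'M[C]_(m, n)) : dagger (A - B) = dagger A - dagger B.
Proof. by rewrite daggerD daggerN. Qed.
Lemma dagger0 m n : dagger (0 : 'M[C]_(m, n)) = 0.
Proof. by apply/matrixP => i j; rewrite !mxE rmorph0. Qed.
Lemma daggerZ m n c (A : 'M[C]_(m, n)) : dagger (c *: A) = cj c *: dagger A.
Proof. by apply/matrixP => i j; rewrite !mxE rmorphM. Qed.
Lemma daggerK m n (A : 'M[C]_(m, n)) : dagger (dagger A) = A.
Proof. by apply/matrixP => i j; rewrite !mxE conjCK. Qed.
Lemma dagger1 n : dagger (1%:M : 'M[C]_n) = 1%:M.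
Proof. by apply/matrixP => i j; rewrite !mxE eq_sym rmorph_nat. Qed.
Lemma dagger_sum m n I (r : seq I) P (F : I -> 'M[C]_(m, n)) :
  dagger (\sum_(i <- r | P i) F i) = \sum_(i <- r | P i) dagger (F i).
Proof. exact: (big_morph _ (@daggerD m n) (@dagger0 m n)). Qed.
Lemma tr_sum n I (r : seq I) P (F : I -> 'M[C]_n) :
  \tr (\sum_(i <- r | P i) F i) = \sum_(i <- r | P i) \tr (F i).
Proof. exact: (big_morph _ (@mxtraceD _ n) (@mxtrace0 _ n)). Qed.

Variable D : nat.

Lemma quad_expand (rho : 'M[C]_D) (x y : 'rV[C]_D) t :
  ((x + t *: y) *m rho *m dagger (x + t *: y)) 0 0 =
  (x *m rho *m dagger x) 0 0 + cj t * (x *m rho *m dagger y) 0 0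
  + t * (y *m rho *m dagger x) 0 0 + t * cj t * (y *m rho *m dagger y) 0 0.
Proof.
rewrite daggerD daggerZ !mulmxDl !mulmxDr -!scalemxAl -!scalemxAr !mxE.
by rewrite !mulrA addrA.
Qed.

Lemma pd_row (rho : 'M[C]_D) (x : 'rV[C]_D) : psd rho -> rho \in unitmx ->
  (x *m rho *m dagger x) 0 0 = 0 -> x = 0.
Proof.
move=> [hr hq] hu h0.
set y := x *m rho.
have dy : dagger y = rho *m dagger x by rewrite /y daggerM hr.
set a := (y *m dagger y) 0 0.
set b := (y *m rho *m dagger y) 0 0.
have a0 : 0 <= a.
  rewrite /a !mxE; apply: sumr_ge0 => k _; rewrite !mxE; exact: mul_conjC_ge0.
have b0 : 0 <= b by exact: hq.
have e1 : (x *m rho *m dagger y) 0 0 = a by rewrite /a dy !mulmxA.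
have e2 : (y *m rho *m dagger x) 0 0 = a by rewrite /a dy !mulmxA.
have b1 : 0 < b + 1 by rewrite ltr_wpDl.
set t := - (a / (b + 1)).
have tr : t \is Num.real.
  rewrite realN; apply: realM; apply: ger0_real; [exact: a0 | by rewrite invr_ge0 ltW].
have ct : cj t = t by exact: conj_Creal.
have := hq (x + t *: y); rewrite quad_expand ct h0 e1 e2.
have -> : 0 + t * a + t * a + t * t * b = - (a ^+ 2 * (b + 2%:R)) / (b + 1) ^+ 2.
  rewrite /t; field; by rewrite gt_eqF.
rewrite pmulr_lge0 ?invr_gt0 ?exprn_gt0 // oppr_ge0 => h.
have ha : a ^+ 2 * (b + 2%:R) = 0.
  by apply/eqP; rewrite eq_le h /= mulr_ge0 ?exprn_ge0 ?addr_ge0.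
have {ha} ha : a = 0.
  move/eqP: ha; rewrite mulf_eq0 expf_eq0 /= => /orP [/eqP //|].
  by rewrite gt_eqF // ltr_wpDl.
have y0 : y = 0.
  apply/rowP => k; rewrite [RHS]mxE.
  have hy i : dagger y i 0 = cj (y 0 i) by rewrite !mxE.
  move: ha; rewrite /a mxE; under eq_bigr do rewrite hy.
  move/psumr_eq0P => h1.
  have := h1 (fun i _ => mul_conjC_ge0 _) k isT.
  by move/eqP; rewrite mul_conjC_eq0 => /eqP.
by rewrite -[x]mulmx1 -(mulmxV hu) mulmxA -/y y0 mul0mx.
Qed.

Lemma tr_quad (rho K : 'M[C]_D) i :
  (K *m rho *m dagger K) i i = (row i K *m rho *m dagger (row i K)) 0 0.
Proof.
rewrite -row_mul !mxE; apply: eq_bigr => k _; by rewrite !mxE.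
Qed.

Lemma tr_psd (rho K : 'M[C]_D) : psd rho -> 0 <= \tr (K *m rho *m dagger K).
Proof.
move=> [_ hq]; rewrite /mxtrace; apply: sumr_ge0 => i _; rewrite tr_quad.
exact: hq.
Qed.

Lemma tr_pd (rho K : 'M[C]_D) : psd rho -> rho \in unitmx ->
  \tr (K *m rho *m dagger K) = 0 -> K = 0.
Proof.
move=> hp hu; rewrite /mxtrace => /psumr_eq0P h.
apply/row_matrixP => i; rewrite row0; apply: (@pd_row rho _ hp hu).
rewrite -tr_quad; apply: h => // j _; rewrite tr_quad; exact: hp.2.
Qed.

End Dag.

Section Key.
Variable R : realType.
Local Notation C := R[i].
Local Notation cj := (@Num.conj C).
Variables (D d : nat).

Lemma tr_dagger (M : 'M[C]_D) : \tr (dagger M) = cj (\tr M).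
Proof.
rewrite /dagger mxtrace_tr /mxtrace rmorph_sum; apply: eq_bigr => i _.
by rewrite mxE.
Qed.

Lemma key (A B : 'I_d -> 'M[C]_D) (rho X : 'M[C]_D) (mu : C) :
  \sum_j dagger (B j) *m B j = 1%:M ->
  psd rho -> rho \in unitmx ->
  \sum_j A j *m rho *m dagger (A j) = rho ->
  mu * cj mu = 1 ->
  \sum_j dagger (B j) *m X *m A j = mu *: X ->
  forall j, X *m A j = mu *: (B j *m X).
Proof.
move=> hB hp hu hA hmu hE.
set t := \tr (X *m rho *m dagger X).
have t0 : 0 <= t by exact: tr_psd.
have ct : cj t = t by exact: geC0_conj.
have S1 : \sum_j \tr (X *m A j *m rho *m dagger (X *m A j)) = t.
  rewrite -tr_sum /t -[in RHS]hA mulmx_sumr mulmx_suml.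
  by congr (mxtrace _); apply: eq_bigr => j _; rewrite daggerM !mulmxA.
have S4 : \sum_j \tr (B j *m X *m rho *m dagger (B j *m X)) = t.
  have -> : t = \tr ((\sum_j dagger (B j) *m B j) *m (X *m rho *m dagger X)).
    by rewrite hB mul1mx.
  rewrite mulmx_suml tr_sum; apply: eq_bigr => j _.
  rewrite daggerM !mulmxA mxtrace_mulC !mulmxA; done.
have S2 : \sum_j \tr (X *m A j *m rho *m dagger (B j *m X)) = mu * t.
  rewrite /t -mxtraceZ !scalemxAl -hE !mulmx_suml tr_sum.
  apply: eq_bigr => j _.
  rewrite daggerM !mulmxA mxtrace_mulC !mulmxA; done.
have S3 : \sum_j \tr (B j *m X *m rho *m dagger (X *m A j)) = cj mu * t.
  transitivity (\sum_j \tr (dagger (X *m A j *m rho *m dagger (B j *m X)))).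
    by apply: eq_bigr => j _; rewrite !daggerM !daggerK hp.1 !mulmxA.
  under eq_bigr do rewrite tr_dagger.
  rewrite -rmorph_sum S2 rmorphM; exact: (congr1 (fun z => cj mu * z) ct).
set K := fun j => X *m A j - mu *: (B j *m X).
have E j : \tr (K j *m rho *m dagger (K j)) =
    \tr (X *m A j *m rho *m dagger (X *m A j))
    - cj mu * \tr (X *m A j *m rho *m dagger (B j *m X))
    - mu * \tr (B j *m X *m rho *m dagger (X *m A j))
    + mu * cj mu * \tr (B j *m X *m rho *m dagger (B j *m X)).
  rewrite /K daggerB daggerZ !(mulmxBl, mulmxBr) -!scalemxAl -!scalemxAr.
  rewrite !raddfB /= !mxtraceZ; ring.
have Z : \sum_j \tr (K j *m rho *m dagger (K j)) = 0.
  under eq_bigr do rewrite E.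
  rewrite !big_split /= !sumrN -!mulr_sumr S1 S2 S3 S4.
  have -> : t - cj mu * (mu * t) - mu * (cj mu * t) + mu * cj mu * t
    = t - (mu * cj mu) * t by ring.
  by rewrite hmu mul1r subrr.
move=> j; apply/eqP; rewrite -subr_eq0; apply/eqP.
apply: (@tr_pd R D rho _ hp hu).
by apply: (psumr_eq0P _ Z) => // i _; exact: tr_psd.
Qed.

End Key.

Section Expi.
Variable R : realType.
Local Notation C := R[i].

Lemma norm_expi (t : R) : `|expi t| = 1.
Proof. by rewrite /expi normc_def /= cos2Dsin2 sqrtr1. Qed.

Lemma expi_surj (z : C) : `|z| = 1 -> exists t : R, expi t = z.
Proof.
case: z => a b; rewrite normc_def /= => -[h].
have h2 : a ^+ 2 + b ^+ 2 = 1.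
  by rewrite -[LHS]sqr_sqrtr ?addr_ge0 ?sqr_ge0 // h expr1n.
have ha : -1 <= a <= 1 by apply/andP; split; nra.
have [_ ca] := acos_def ha.
have hs : sin (acos a) = `|b|.
  rewrite sin_acos // -sqrtr_sqr; congr Num.sqrt; lra.
case: (leP 0 b) => hb.
  by exists (acos a); rewrite /expi ca hs ger0_norm.
exists (- acos a); rewrite /expi cosN sinN ca hs ltr0_norm //.
by rewrite opprK.
Qed.

End Expi.

Section Main.
Variable R : realType.
Local Notation C := R[i].
Local Notation cj := (@Num.conj C).
Variables (D d : nat).

Lemma conjmxC_mul m n p (A : 'M[C]_(m, n)) (B : 'M[C]_(n, p)) :
  conjmxC (A *m B) = conjmxC A *m conjmxC B.
Proof. exact: map_mxM. Qed.
Lemma conjmxCK m n (A : 'M[C]_(m, n)) : conjmxC (conjmxC A) = A.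
Proof. by apply/matrixP => i j; rewrite !mxE conjCK. Qed.
Lemma conjmxC_tr m n (A : 'M[C]_(m, n)) : conjmxC (A^T) = dagger A.
Proof. by apply/matrixP => i j; rewrite !mxE. Qed.
Lemma conjmxCZ m n c (A : 'M[C]_(m, n)) : conjmxC (c *: A) = cj c *: conjmxC A.
Proof. by apply/matrixP => i j; rewrite !mxE rmorphM. Qed.
Lemma conjmxCD m n (A B : 'M[C]_(m, n)) : conjmxC (A + B) = conjmxC A + conjmxC B.
Proof. by apply/matrixP => i j; rewrite !mxE rmorphD. Qed.
Lemma conjmxC0 m n : conjmxC (0 : 'M[C]_(m, n)) = 0.
Proof. by apply/matrixP => i j; rewrite !mxE rmorph0. Qed.
Lemma conjmxC_sum m n I (r : seq I) P (F : I -> 'M[C]_(m, n)) :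
  conjmxC (\sum_(i <- r | P i) F i) = \sum_(i <- r | P i) conjmxC (F i).
Proof. exact: (big_morph _ (@conjmxCD m n) (@conjmxC0 m n)). Qed.

Lemma tens_suml (u : 'I_d -> C) (F : 'I_d -> 'M[C]_D) (Y : 'M[C]_D) :
  \sum_k u k *: (F k *t Y) = (\sum_k u k *: F k) *t Y.
Proof.
apply/matrixP => i j; rewrite !mxE !summxE mulr_suml; apply: eq_bigr => k _.
by rewrite !mxE mulrA.
Qed.

Lemma vec_transfer (F A : 'I_d -> 'M[C]_D) (M : 'M[C]_D) :
  vecr M *m (\sum_j (F j *t conjmxC (A j))) =
  vecr (\sum_j (F j)^T *m M *m conjmxC (A j)).
Proof.
rewrite mulmx_sumr vecr_sum; apply: eq_bigr => j _; exact: K1.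
Qed.

Lemma transfer_uE (A : 'I_d -> 'M[C]_D) u :
  transfer_u A u = \sum_j ((\sum_k u j k *: A k) *t conjmxC (A j)).
Proof. by apply: eq_bigr => j _; rewrite tens_suml. Qed.

Lemma final (A B : 'I_d -> 'M[C]_D) (X : 'M[C]_D) (mu c : C) :
  mu * cj mu = 1 -> X != 0 ->
  (forall j, X *m A j = mu *: (B j *m X)) -> dagger X *m X = c%:M ->
  exists v : 'M[C]_D, unitary v /\
    forall j, B j = cj mu *: (v *m A j *m dagger v).
Proof.
move=> hmu hX hXA hXX.
have hD : (0 < D)%N.
  case: (posnP D) => // D0; move/eqP: hX; case.
  apply/matrixP => i; have := ltn_ord i; by rewrite {2}D0.
pose j0 : 'I_D := Ordinal hD.
have c0 : 0 <= c.
  have := congr1 (fun M : 'M[C]_D => M j0 j0) hXX; rewrite /= [RHS]mxE eqxx mulr1n => <-.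
  rewrite mxE; apply: sumr_ge0 => k _; rewrite !mxE mulrC; exact: mul_conjC_ge0.
have psd1 : psd (1%:M : 'M[C]_D).
  split; first exact: dagger1.
  move=> x; rewrite mulmx1 mxE; apply: sumr_ge0 => k _; rewrite !mxE.
  exact: mul_conjC_ge0.
have cn0 : c != 0.
  apply/eqP => cz; move/eqP: hX; apply.
  have : dagger X = 0.
    apply: (@tr_pd R D 1%:M _ psd1 (unitmx1 _ _)).
    by rewrite mulmx1 daggerK hXX cz mxtrace_scalar mul0rn.
  by move=> h; rewrite -[X]daggerK h dagger0.
set s := sqrtC c.
have s0 : 0 < s by rewrite sqrtC_gt0 lt_def cn0.
have sn0 : s != 0 by rewrite gt_eqF.
have s2 : s ^+ 2 = c by exact: sqrtCK.
set v := s^-1 *: X.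
have hv : dagger v *m v = 1%:M.
  rewrite /v daggerZ geC0_conj ?invr_ge0 ?ltW // -scalemxAl -scalemxAr hXX.
  rewrite !scale_scalar_mx -s2; congr (_%:M); field.
  by rewrite sn0.
have uv : unitary v by exact: mulmx1C.
exists v; split => // j.
have hBv : B j *m v = cj mu *: (v *m A j).
  rewrite /v -scalemxAr -scalemxAl hXA !scalerA; congr (_ *: _).
  by rewrite mulrAC [_ * mu]mulrC hmu mul1r.
by rewrite -[B j]mulmx1 -uv mulmxA hBv -scalemxAl.
Qed.

Lemma left_canon_B (A : 'I_d -> 'M[C]_D) (u : 'M[C]_d) :
  left_canonical A -> unitary u ->
  \sum_j dagger (\sum_k u j k *: A k) *m (\sum_k u j k *: A k) = 1%:M.
Proof.
move=> hA hu.
have hu' : dagger u *m u = 1%:M by exact: mulmx1C.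
rewrite -hA.
transitivity (\sum_j \sum_k \sum_l (cj (u j k) * u j l) *: (dagger (A k) *m A l)).
  apply: eq_bigr => j _; rewrite dagger_sum mulmx_suml; apply: eq_bigr => k _.
  rewrite mulmx_sumr; apply: eq_bigr => l _.
  by rewrite daggerZ -scalemxAl -scalemxAr scalerA.
rewrite exchange_big /=; apply: eq_bigr => k _.
rewrite exchange_big /=.
rewrite (bigD1 k) //= [X in _ + X]big1 ?addr0.
  rewrite -scaler_suml.
  have := congr1 (fun M : 'M[C]_d => M k k) hu'; rewrite /= [RHS]mxE eqxx mulr1n mxE => h.
  rewrite (eq_bigr (fun j => dagger u k j * u j k)); last by move=> j _; rewrite !mxE.
  by rewrite h scale1r.
move=> l hl; rewrite -scaler_suml.
have := congr1 (fun M : 'M[C]_d => M k l) hu'; rewrite /= [RHS]mxE eq_sym (negbTE hl) mulr0n mxE => h.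
rewrite (eq_bigr (fun j => dagger u k j * u j l)); last by move=> j _; rewrite !mxE.
by rewrite h scale0r.
Qed.

End Main.

Theorem lemma2 (R : realType) (d D : nat) (A : 'I_d -> 'M[R[i]]_D)
    (u : 'M[R[i]]_d) :
  left_canonical A -> injective_mps A -> unitary u ->
  (exists l : R[i], eigenvalue (transfer_u A u) l /\ `|l| = 1) <->
  (exists (v : 'M[R[i]]_D) (theta : R), unitary v /\
     forall j : 'I_d,
       \sum_(k < d) u j k *: A k = expi theta *: (v *m A j *m dagger v)).
Proof.
move=> hLC [hE1 hfix _ [rho [[hpsd _] hu hrho _]]] hU.
set B := fun j => \sum_(k < d) u j k *: A k.
have hB : \sum_j dagger (B j) *m B j = 1%:M by exact: left_canon_B.
split.
- move=> [l [/eigenvalueP [x hx x0] hl]].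
  set Xm := matr x.
  have ex : x = vecr Xm by rewrite /Xm matrK.
  have hM : \sum_j (B j)^T *m Xm *m conjmxC (A j) = l *: Xm.
    apply: vecr_inj; rewrite vecrZ -vec_transfer -transfer_uE -ex; exact: hx.
  set X := conjmxC Xm.
  have hE : \sum_j dagger (B j) *m X *m A j = Num.conj l *: X.
    rewrite -conjmxCZ -hM conjmxC_sum; apply: eq_bigr => j _.
    by rewrite !conjmxC_mul conjmxC_tr conjmxCK.
  have hX : X != 0.
    apply/eqP => h; move/eqP: x0; apply.
    by rewrite ex -[Xm]conjmxCK -/X h conjmxC0 vecr0.
  have hl2 : l * Num.conj l = 1 by rewrite -normCK hl expr1n.
  have hmu : Num.conj l * Num.conj (Num.conj l) = 1 by rewrite conjCK mulrC.
  have hk := key hB hpsd hu hrho hmu hE.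
  have [c hc] : exists c, dagger X *m X = c%:M.
    apply: hfix.
    transitivity (\sum_j dagger (X *m A j) *m (X *m A j)).
      by apply: eq_bigr => j _; rewrite daggerM !mulmxA.
    under eq_bigr do rewrite hk daggerZ daggerM -scalemxAl -scalemxAr scalerA.
    rewrite -scaler_sumr mulrC hmu scale1r.
    transitivity (dagger X *m (\sum_j dagger (B j) *m B j) *m X).
      rewrite mulmx_sumr mulmx_suml; apply: eq_bigr => j _; by rewrite !mulmxA.
    by rewrite hB mulmx1.
  have [v [hv hBv]] := final hmu hX hk hc.
  have [t ht] := expi_surj hl.
  exists v, t; split => // j; rewrite ht.
  by have := hBv j; rewrite conjCK.
- move=> [v [t [hv hBv]]].
  exists (expi t); split; last exact: norm_expi.
  apply/eigenvalueP.
  move/eigenvalueP: hE1 => [x hx x0].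
  set Xm := matr x.
  have ex : x = vecr Xm by rewrite /Xm matrK.
  have hM : \sum_j (A j)^T *m Xm *m conjmxC (A j) = Xm.
    apply: vecr_inj; rewrite -vec_transfer -ex hx scale1r //.
  have hv' : v^T *m conjmxC v = 1%:M.
    have h1 : dagger v *m v = 1%:M by exact: mulmx1C.
    have h2 := congr1 trmx h1; rewrite trmx_mul trmx1 /dagger trmxK in h2.
    exact: h2.
  set Y := conjmxC v *m Xm.
  exists (vecr Y).
    rewrite transfer_uE vec_transfer -vecrZ; congr vecr.
    transitivity (\sum_j expi t *: (conjmxC v *m ((A j)^T *m Xm *m conjmxC (A j)))).
      apply: eq_bigr => j _; rewrite /B hBv.
      rewrite linearZ /= !trmx_mul -!scalemxAl; congr (_ *: _).
      rewrite /dagger trmxK /Y.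
      by rewrite !mulmxA -[_ *m v^T *m conjmxC v]mulmxA hv' mulmx1.
    by rewrite -scaler_sumr -mulmx_sumr hM.
  apply/eqP => h; move/eqP: x0; apply.
  have : Y = 0 by rewrite -vecr0 in h; exact: vecr_inj.
  by move=> hY; rewrite ex -[Xm]mul1mx -hv' -mulmxA -/Y hY mulmx0 vecr0.
Qed.
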